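(* Let $L$ be a PG-lattice and $M$ a faithful multiplication PG-lattice $L$-module with $I_M$ compact. Let $N$ be a proper element of $M$ and $\delta_L$ an expansion function on $L$. Then the following are equivalent: (1) $N$ is a $\delta_L$-primary element of $M$; (2) $(N:I_M)$ is a $\delta_L$-primary element of $L$; (3) $N=qI_M$ for some $\delta_L$-primary element $q\in L$.
   Context: $L$ is a multiplicative lattice (complete lattice with commutative, associative multiplication distributing over arbitrary joins, identity $1$, least $0$), compactly generated, $1$ compact, finite products of compact elements compact. An $L$-module is a complete lattice $M$ (least $O_M$, greatest $I_M$) with product $aB\in M$ satisfying $(\bigvee a_\alpha)A=\bigvee(a_\alpha A)$, $a(\bigvee A_\alpha)=\bigvee(aA_\alpha)$, $(ab)A=a(bA)$, $1A=A$, $0A=O_M$. $(A:B)=\bigvee\{x\in L:xB\leqslant A\}$ for $A,B\in M$. $e\in L$ is principal if $a\wedge be=((a:e)\wedge b)e$ and $(ae\vee b):e=(b:e)\vee a$ for all $a,b$; $L$ is a PG-lattice if every element is a join of principal elements. $N\in M$ is principal if $(b\wedge(B:N))N=bN\wedge B$ and $b\vee(B:N)=((bN\vee B):N)$ for all $b\in L,B\in M$; $M$ is a PG-lattice module if every element is a join of principal elements. $M$ is faithful if $(O_M:I_M)=0$; a multiplication module if every element of $M$ is $aI_M$ for some $a\in L$. An expansion function on $L$ is a map $\delta_L:L\to L$ with $a\leqslant\delta_L(a)$ and $a\leqslant b\Rightarrow\delta_L(a)\leqslant\delta_L(b)$. A proper element $p<1$ of $L$ is $\delta_L$-primary if for $a,b\in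 L$, $ab\leqslant p$ implies $a\leqslant p$ or $b\leqslant\delta_L(p)$. A proper element $P<I_M$ of $M$ is $\delta_L$-primary if for all $A\in M$, $a\in L$, $aA\leqslant P$ implies $A\leqslant P$ or $a\leqslant\delta_L((P:I_M))$. *)

(* Defs.v *)
From Stdlib Require Import List.

Record MultLattice := {
  ml_car :> Type;
  ml_le : ml_car -> ml_car -> Prop;
  ml_sup : (ml_car -> Prop) -> ml_car;
  ml_mul : ml_car -> ml_car -> ml_car;
  ml_one : ml_car;
  ml_le_refl : forall a, ml_le a a;
  ml_le_antisym : forall a b, ml_le a b -> ml_le b a -> a = b;
  ml_le_trans : forall a b c, ml_le a b -> ml_le b c -> ml_le a c;
  ml_sup_ub : forall (S : ml_car -> Prop) a, S a -> ml_le a (ml_sup S);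
  ml_sup_least : forall (S : ml_car -> Prop) b,
      (forall a, S a -> ml_le a b) -> ml_le (ml_sup S) b;
  ml_mulC : forall a b, ml_mul a b = ml_mul b a;
  ml_mulA : forall a b c, ml_mul a (ml_mul b c) = ml_mul (ml_mul a b) c;
  ml_mul_sup : forall a (S : ml_car -> Prop),
      ml_mul a (ml_sup S) = ml_sup (fun y => exists x, S x /\ y = ml_mul a x);
  ml_mul1 : forall a, ml_mul ml_one a = a;
  ml_one_top : forall a, ml_le a ml_one
}.

Arguments ml_le {L} : rename.
Arguments ml_sup {L} : rename.
Arguments ml_mul {L} : rename.
Arguments ml_one {L} : rename.

Section LatticeDefs.
Variable L : MultLattice.

Definition ml_zero : L := ml_sup (fun _ => False).
Definition ml_lt (a b : L) : Prop := ml_le a b /\ a <> b.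
Definition ml_join (a b : L) : L := ml_sup (fun x => x = a \/ x = b).
Definition ml_meet (a b : L) : L := ml_sup (fun x => ml_le x a /\ ml_le x b).
Definition ml_colon (a b : L) : L := ml_sup (fun x => ml_le (ml_mul x b) a).

Definition ml_compact (c : L) : Prop :=
  forall S : L -> Prop, ml_le c (ml_sup S) ->
    exists l : list L, (forall x, In x l -> S x) /\ ml_le c (ml_sup (fun x => In x l)).

Definition ml_standing : Prop :=
  (forall a : L, exists S : L -> Prop, (forall c, S c -> ml_compact c) /\ a = ml_sup S)
  /\ ml_compact ml_one
  /\ (forall a b : L, ml_compact a -> ml_compact b -> ml_compact (ml_mul a b)).

Definition ml_principal (e : L) : Prop :=
  (forall a b : L, ml_meet a (ml_mul b e) = ml_mul (ml_meet (ml_colon a e) b) e)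
  /\ (forall a b : L, ml_colon (ml_join (ml_mul a e) b) e = ml_join (ml_colon b e) a).

Definition PG_lattice : Prop :=
  forall a : L, exists S : L -> Prop, (forall e, S e -> ml_principal e) /\ a = ml_sup S.

Definition expansion (d : L -> L) : Prop :=
  (forall a, ml_le a (d a)) /\ (forall a b, ml_le a b -> ml_le (d a) (d b)).

Definition delta_primary (d : L -> L) (p : L) : Prop :=
  ml_lt p ml_one /\
  forall a b : L, ml_le (ml_mul a b) p -> ml_le a p \/ ml_le b (d p).

End LatticeDefs.

Record LModule (L : MultLattice) := {
  lm_car :> Type;
  lm_le : lm_car -> lm_car -> Prop;
  lm_sup : (lm_car -> Prop) -> lm_car;
  lm_act : L -> lm_car -> lm_car;
  lm_le_refl : forall A, lm_le A A;
  lm_le_antisym : forall A B, lm_le A B -> lm_le B A -> A = B;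
  lm_le_trans : forall A B C, lm_le A B -> lm_le B C -> lm_le A C;
  lm_sup_ub : forall (S : lm_car -> Prop) A, S A -> lm_le A (lm_sup S);
  lm_sup_least : forall (S : lm_car -> Prop) B,
      (forall A, S A -> lm_le A B) -> lm_le (lm_sup S) B;
  lm_act_supl : forall (S : L -> Prop) A,
      lm_act (ml_sup S) A = lm_sup (fun Y => exists a, S a /\ Y = lm_act a A);
  lm_act_supr : forall a (S : lm_car -> Prop),
      lm_act a (lm_sup S) = lm_sup (fun Y => exists A, S A /\ Y = lm_act a A);
  lm_actA : forall a b A, lm_act (ml_mul a b) A = lm_act a (lm_act b A);
  lm_act1 : forall A, lm_act ml_one A = A;
  lm_act0 : forall A, lm_act (ml_zero L) A = lm_sup (fun _ => False)
}.

Arguments lm_le {L M} : rename.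
Arguments lm_sup {L M} : rename.
Arguments lm_act {L M} : rename.

Section ModuleDefs.
Variables (L : MultLattice) (M : LModule L).

Definition lm_bot : M := lm_sup (fun _ => False).
Definition lm_top : M := lm_sup (fun _ => True).
Definition lm_lt (A B : M) : Prop := lm_le A B /\ A <> B.
Definition lm_join (A B : M) : M := lm_sup (fun X => X = A \/ X = B).
Definition lm_meet (A B : M) : M := lm_sup (fun X => lm_le X A /\ lm_le X B).
Definition lm_colon (A B : M) : L := ml_sup (fun x => lm_le (lm_act x B) A).

Definition lm_compact (C : M) : Prop :=
  forall S : M -> Prop, lm_le C (lm_sup S) ->
    exists l : list M, (forall X, In X l -> S X) /\ lm_le C (lm_sup (fun X => In X l)).

Definition lm_principal (N : M) : Prop :=
  (forall (b : L) (B : M),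
      lm_act (ml_meet L b (lm_colon B N)) N = lm_meet (lm_act b N) B)
  /\ (forall (b : L) (B : M),
      ml_join L b (lm_colon B N) = lm_colon (lm_join (lm_act b N) B) N).

Definition PG_module : Prop :=
  forall A : M, exists S : M -> Prop, (forall N, S N -> lm_principal N) /\ A = lm_sup S.

Definition lm_faithful : Prop := lm_colon lm_bot lm_top = ml_zero L.

Definition multiplication_module : Prop :=
  forall N : M, exists a : L, N = lm_act a lm_top.

Definition lm_delta_primary (d : L -> L) (P : M) : Prop :=
  lm_lt P lm_top /\
  forall (A : M) (a : L), lm_le (lm_act a A) P ->
    lm_le A P \/ ml_le a (d (lm_colon P lm_top)).

End ModuleDefs.

(* Main.v *)
Require Import Defs.
From Stdlib Require Import List.

Section LL.
Variable L : MultLattice.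
Local Notation le := (@ml_le L).
Local Notation mul := (@ml_mul L).
Local Notation one := (@ml_one L).
Local Notation join := (ml_join L).
Local Notation zero := (ml_zero L).

Lemma lrefl (a : L) : le a a. Proof. apply ml_le_refl. Qed.
Lemma ltrans (a b c : L) : le a b -> le b c -> le a c. Proof. apply ml_le_trans. Qed.
Lemma zero_least (a : L) : le zero a.
Proof. apply ml_sup_least; intros ? []. Qed.
Lemma join_l (a b : L) : le a (join a b). Proof. apply ml_sup_ub; left; reflexivity. Qed.
Lemma join_r (a b : L) : le b (join a b). Proof. apply ml_sup_ub; right; reflexivity. Qed.
Lemma join_least (a b c : L) : le a c -> le b c -> le (join a b) c.
Proof. intros; apply ml_sup_least; intros x [-> | ->]; auto. Qed.
Lemma sup_mono (S T : L -> Prop) : (forall y, S y -> T y) -> le (ml_sup S) (ml_sup T).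
Proof. intros H; apply ml_sup_least; intros; apply ml_sup_ub; auto. Qed.

Lemma mul_join (c a b : L) : mul c (join a b) = join (mul c a) (mul c b).
Proof.
  unfold ml_join; rewrite ml_mul_sup. apply ml_le_antisym.
  - apply ml_sup_least; intros y [x [[-> | ->] ->]]; apply ml_sup_ub; auto.
  - apply ml_sup_least; intros y [-> | ->]; apply ml_sup_ub; eauto.
Qed.
Lemma join_le_eq (a b : L) : le a b -> join a b = b.
Proof. intros; apply ml_le_antisym; [apply join_least; auto using lrefl | apply join_r]. Qed.
Lemma mul_mono_r (c a b : L) : le a b -> le (mul c a) (mul c b).
Proof. intros H; rewrite <- (join_le_eq a b H), mul_join; apply join_l. Qed.
Lemma mul_mono_l (c a b : L) : le a b -> le (mul a c) (mul b c).
Proof. intros H; rewrite (ml_mulC L a), (ml_mulC L b); apply mul_mono_r; auto. Qed.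
Lemma mul_mono (a b c d : L) : le a b -> le c d -> le (mul a c) (mul b d).
Proof. intros; eapply ltrans; [apply mul_mono_l; eauto | apply mul_mono_r; auto]. Qed.
Lemma mul1r (a : L) : mul a one = a.
Proof. rewrite ml_mulC; apply ml_mul1. Qed.
Lemma mul_le_l (a y : L) : le (mul a y) a.
Proof. rewrite <- (mul1r a) at 2; apply mul_mono_r, ml_one_top. Qed.
Lemma mul_le_r (a y : L) : le (mul y a) a.
Proof. rewrite ml_mulC; apply mul_le_l. Qed.
Lemma colon_le (a b : L) : le (mul (ml_colon L a b) b) a.
Proof.
  rewrite ml_mulC; unfold ml_colon; rewrite ml_mul_sup.
  apply ml_sup_least; intros y [x [Hx ->]]; rewrite ml_mulC; auto.
Qed.
Lemma colon_spec (a b x : L) : le x (ml_colon L a b) <-> le (mul x b) a.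
Proof.
  split; intros H.
  - eapply ltrans; [apply mul_mono_l; eauto | apply colon_le].
  - apply ml_sup_ub; auto.
Qed.

Lemma square_step (t R : L) : le one (join t R) -> le one (join (mul t t) R).
Proof.
  intros H. eapply ltrans with (mul (join t R) (join t R)).
  { rewrite <- (ml_mul1 L one) at 1; apply mul_mono; auto. }
  rewrite mul_join, (ml_mulC L (join t R) t), (ml_mulC L (join t R) R), !mul_join.
  apply join_least; apply join_least.
  - apply join_l.
  - eapply ltrans; [apply mul_le_r | apply join_r].
  - eapply ltrans; [apply mul_le_l | apply join_r].
  - eapply ltrans; [apply mul_le_l | apply join_r].
Qed.

Lemma listE (J : L) (tl : list L) :
  (forall t, In t tl -> le (mul t t) J) ->
  forall c, le one (ml_sup (fun y => In y tl \/ y = c)) -> le one (join J c).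
Proof.
  induction tl as [|t l IH]; intros HJ c H.
  - eapply ltrans; [exact H|]. apply ml_sup_least; intros y [[] | ->]; apply join_r.
  - set (R := ml_sup (fun y => In y l \/ y = c)).
    assert (H1 : le one (join t R)).
    { eapply ltrans; [exact H|]. apply ml_sup_least; intros y [[-> | Hy] | ->].
      - apply join_l.
      - eapply ltrans; [|apply join_r]; apply ml_sup_ub; auto.
      - eapply ltrans; [|apply join_r]; apply ml_sup_ub; auto. }
    apply square_step in H1.
    assert (H2 : le one (join J (join J c))).
    { apply IH. { intros; apply HJ; right; auto. }
      eapply ltrans; [exact H1|]. apply join_least.
      - eapply ltrans; [apply HJ; left; reflexivity|].
        eapply ltrans; [apply (join_l J c)|]. apply ml_sup_ub; auto.
      - apply ml_sup_least; intros y [Hy | ->]; [apply ml_sup_ub; auto|].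
        eapply ltrans; [apply (join_r J c)|]. apply ml_sup_ub; auto. }
    eapply ltrans; [exact H2|]. apply join_least; [apply join_l | apply lrefl].
Qed.

Lemma two_factor (th u v : L) : le one (join th u) -> le one (join th v) -> le one (join th (mul u v)).
Proof.
  intros Hu Hv. eapply ltrans with (mul (join th u) (join th v)).
  { rewrite <- (ml_mul1 L one) at 1; apply mul_mono; auto. }
  rewrite mul_join, (ml_mulC L (join th u) th), (ml_mulC L (join th u) v), !mul_join.
  apply join_least; apply join_least.
  - eapply ltrans; [apply mul_le_l | apply join_l].
  - eapply ltrans; [apply mul_le_l | apply join_l].
  - eapply ltrans; [apply mul_le_r | apply join_l].
  - rewrite ml_mulC; apply join_r.
Qed.
End LL.
Section MM.
Variable L : MultLattice.
Variable M : LModule L.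
Local Notation le := (@ml_le L).
Local Notation mul := (@ml_mul L).
Local Notation one := (@ml_one L).
Local Notation join := (ml_join L).
Local Notation zero := (ml_zero L).
Local Notation mle := (@lm_le L M).
Local Notation act := (@lm_act L M).
Local Notation T := (lm_top L M).
Local Notation B0 := (lm_bot L M).
Local Notation colon := (lm_colon L M).

Lemma mrefl (A : M) : mle A A. Proof. apply lm_le_refl. Qed.
Lemma mtrans (A B C : M) : mle A B -> mle B C -> mle A C. Proof. apply lm_le_trans. Qed.
Lemma top_ge (A : M) : mle A T. Proof. apply lm_sup_ub; exact I. Qed.
Lemma act_mono_l (a b : L) (A : M) : le a b -> mle (act a A) (act b A).
Proof.
  intros H. rewrite <- (join_le_eq L a b H). unfold ml_join; rewrite lm_act_supl.
  apply lm_sup_ub; exists a; split; auto.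
Qed.
Lemma act_mono_r (a : L) (A B : M) : mle A B -> mle (act a A) (act a B).
Proof.
  intros H. assert (E : B = lm_sup (fun X => X = A \/ X = B)).
  { apply lm_le_antisym. apply lm_sup_ub; auto.
    apply lm_sup_least; intros X [-> | ->]; auto using mrefl. }
  rewrite E, lm_act_supr. apply lm_sup_ub; exists A; split; auto.
Qed.
Lemma act_comm (a b : L) (A : M) : act a (act b A) = act b (act a A).
Proof. rewrite <- !lm_actA, ml_mulC; reflexivity. Qed.
Lemma mcolon_le (N A : M) : mle (act (colon N A) A) N.
Proof.
  unfold lm_colon; rewrite lm_act_supl. apply lm_sup_least; intros Y [a [Ha ->]]; auto.
Qed.
Lemma mcolon_spec (N A : M) (x : L) : le x (colon N A) <-> mle (act x A) N.
Proof.
  split; intros H.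
  - eapply mtrans; [apply act_mono_l; eauto | apply mcolon_le].
  - apply ml_sup_ub; auto.
Qed.

Lemma princ_cancel (N : M) (x b : L) : lm_principal L M N ->
  mle (act x N) (act b N) -> le x (join b (colon B0 N)).
Proof.
  intros [_ HP] H. rewrite (HP b B0). apply mcolon_spec.
  eapply mtrans; [exact H|]. apply lm_sup_ub; auto.
Qed.

Lemma cancellation :
  lm_faithful L M -> multiplication_module L M -> PG_module L M -> lm_compact L M T ->
  forall x a : L, mle (act x T) (act a T) -> le x a.
Proof.
  intros Hf Hm Hpg Hc x a Hxa.
  destruct (Hpg T) as [S [HS HT]].
  destruct (Hc S) as [l [Hl HTl]]. { rewrite <- HT; apply mrefl. }
  set (tl := map (fun N => colon N T) l).
  set (th := ml_sup (fun y => In y tl)).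
  assert (HNl : forall N, In N l -> mle N (act (colon N T) T)).
  { intros N _. destruct (Hm N) as [c Hc'].
    assert (Hc2 : le c (colon N T)) by (apply mcolon_spec; rewrite <- Hc'; apply mrefl).
    apply mtrans with (act c T); [rewrite <- Hc'; apply mrefl | apply act_mono_l; exact Hc2]. }
  assert (Hth : forall N, In N l -> le (colon N T) th).
  { intros N HN; apply ml_sup_ub; unfold tl; apply (in_map (fun N => colon N T)); auto. }
  assert (HA : mle T (act th T)).
  { eapply mtrans; [exact HTl|]. apply lm_sup_least; intros N HN.
    eapply mtrans; [apply HNl; auto|]. apply act_mono_l; auto. }
  assert (HB : forall N, In N l -> le one (join th (colon B0 N))).
  { intros N HN. apply princ_cancel; [apply HS, Hl; auto|].
    rewrite lm_act1. eapply mtrans; [apply HNl; auto|].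
    eapply mtrans; [apply act_mono_r, HA|]. rewrite act_comm.
    apply act_mono_r, mcolon_le. }
  set (prodl := fold_right (fun N acc => mul (colon B0 N) acc) one).
  assert (HC1 : forall l', (forall N, In N l' -> In N l) -> le one (join th (prodl l'))).
  { induction l' as [|N l' IH]; intros Hsub; simpl.
    - apply join_r.
    - apply two_factor; [apply HB, Hsub; left; auto | apply IH; intros; apply Hsub; right; auto]. }
  assert (HC2 : forall l' N, In N l' -> le (prodl l') (colon B0 N)).
  { induction l' as [|N' l' IH]; intros N HN; [destruct HN|]; simpl; destruct HN as [-> | HN].
    - apply mul_le_l.
    - eapply ltrans; [apply mul_le_r | apply IH; auto]. }
  assert (HC3 : le (prodl l) zero).
  { unfold lm_faithful in Hf. rewrite <- Hf. apply mcolon_spec.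
    eapply mtrans; [apply act_mono_r, HTl|]. rewrite lm_act_supr.
    apply lm_sup_least; intros Y [N [HN ->]].
    eapply mtrans; [apply act_mono_l, HC2; eauto|]. apply mcolon_le. }
  assert (Hth1 : le one th).
  { eapply ltrans; [apply (HC1 l); auto|]. apply join_least; [apply lrefl|].
    eapply ltrans; [exact HC3 | apply zero_least]. }
  assert (HD : forall t, In t tl -> le (mul t t) (ml_colon L a x)).
  { intros t Ht. unfold tl in Ht. apply in_map_iff in Ht. destruct Ht as [N [<- HN]].
    set (t := colon N T). set (u := colon B0 N).
    assert (H1 : le (mul x t) (join a u)).
    { apply princ_cancel; [apply HS, Hl; auto|].
      eapply mtrans; [apply act_mono_r, top_ge|].
      rewrite ml_mulC, lm_actA. eapply mtrans; [apply act_mono_r, Hxa|].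
      rewrite act_comm. apply act_mono_r, mcolon_le. }
    assert (H2 : le (mul t u) zero).
    { unfold lm_faithful in Hf. rewrite <- Hf. apply mcolon_spec.
      rewrite ml_mulC, lm_actA. eapply mtrans; [apply act_mono_r, mcolon_le|].
      apply mcolon_le. }
    apply colon_spec.
    assert (E : mul (mul t t) x = mul t (mul x t)).
    { rewrite <- ml_mulA, (ml_mulC L t x); reflexivity. }
    rewrite E. eapply ltrans; [apply mul_mono_r, H1|]. rewrite mul_join.
    apply join_least; [apply mul_le_r|]. eapply ltrans; [exact H2 | apply zero_least]. }
  assert (HE : le one (join (ml_colon L a x) zero)).
  { apply (listE L _ tl); auto. eapply ltrans; [exact Hth1|]. apply sup_mono; auto. }
  assert (HE' : le one (ml_colon L a x)).
  { eapply ltrans; [exact HE|]. apply join_least; [apply lrefl | apply zero_least]. }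
  apply colon_spec in HE'. rewrite ml_mul1 in HE'. exact HE'.
Qed.
End MM.

Theorem theorem4p14 (L : MultLattice) (M : LModule L) (N : M) (d : L -> L) :
  ml_standing L ->
  PG_lattice L ->
  lm_faithful L M ->
  multiplication_module L M ->
  PG_module L M ->
  lm_compact L M (lm_top L M) ->
  lm_lt L M N (lm_top L M) ->
  expansion L d ->
  (lm_delta_primary L M d N <-> delta_primary L d (lm_colon L M N (lm_top L M))) /\
  (delta_primary L d (lm_colon L M N (lm_top L M)) <->
     exists q : L, delta_primary L d q /\ N = lm_act q (lm_top L M)).
Proof.
  intros Hst Hpgl Hf Hm Hpg Hc [HNle HNne] Hd.
  set (T := lm_top L M). set (P := lm_colon L M N T).
  assert (HPT : lm_le (lm_act P T) N) by apply mcolon_le.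
  assert (Hprim : delta_primary L d P -> lm_delta_primary L M d N).
  { intros [_ HP]. split; [split; auto|].
    intros A a HaA. destruct (Hm A) as [c ->].
    rewrite <- lm_actA in HaA. apply (mcolon_spec L M) in HaA.
    rewrite ml_mulC in HaA. destruct (HP c a HaA) as [H | H]; [left | right; exact H].
    eapply mtrans; [apply act_mono_l, H | exact HPT]. }
  split; split.
  - intros [_ HN]. split.
    + split; [apply ml_one_top|]. intros E. apply HNne.
      apply lm_le_antisym; auto. fold T. rewrite <- (lm_act1 L M T), <- E. exact HPT.
    + intros a b Hab. assert (H : lm_le (lm_act b (lm_act a T)) N).
      { rewrite <- lm_actA, ml_mulC. apply (mcolon_spec L M). exact Hab. }
      destruct (HN _ _ H) as [H1 | H1]; [left | right; exact H1].
      apply (mcolon_spec L M); exact H1.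
  - exact Hprim.
  - intros HP. exists P. split; auto. destruct (Hm N) as [c Ec].
    apply lm_le_antisym; auto. eapply mtrans with (lm_act c T).
    + unfold T; rewrite <- Ec; apply mrefl.
    + apply act_mono_l, mcolon_spec. unfold T; rewrite <- Ec; apply mrefl.
  - intros [q [Hq Eq]].
    assert (EP : P = q).
    { apply ml_le_antisym.
      - apply (cancellation L M Hf Hm Hpg Hc). eapply mtrans; [exact HPT|]. rewrite Eq; apply mrefl.
      - apply (mcolon_spec L M). rewrite Eq. apply mrefl. }
    rewrite EP; exact Hq.
Qed.
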